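(* Let $\mathcal G=(\mathcal V,\mathcal E)$ be a weakly connected digraph and let $e$ be a tight edge of $\mathcal G$. Then $\gamma(\mathcal G+e)=\gamma(\mathcal G)-1$, where $\mathcal G+e=(\mathcal V,\mathcal E\cup\{e\})$.
   Context: For a strongly connected component (SCC) $\mathcal S$ of a digraph $(\mathcal V,\mathcal E)$, let $\mathcal O_{\mathcal S}=\{(u,v)\in\mathcal E:u\in\mathcal S,v\notin\mathcal S\}$ and $\mathcal I_{\mathcal S}=\{(u,v)\in\mathcal E:u\notin\mathcal S,v\in\mathcal S\}$. $\mathcal S$ is a source SCC (s-SCC) if $\mathcal O_{\mathcal S}\neq\emptyset$ and $\mathcal I_{\mathcal S}=\emptyset$, and a target SCC (t-SCC) if $\mathcal O_{\mathcal S}=\emptyset$ and $\mathcal I_{\mathcal S}\neq\emptyset$. $\gamma(\mathcal G)$ is the maximum of the number of s-SCCs and the number of t-SCCs of $\mathcal G$. Write $a\rightsquigarrow b$ if there is a directed path from $a$ to $b$. If $\mathcal G$ has $\alpha$ s-SCCs and $\beta$ t-SCCs, an edge $(t,s)\in(\mathcal V\times\mathcal V)\setminus\mathcal E$ is tight if: (i) $s$ belongs to an s-SCC; (ii) $t$ belongs to a t-SCC; (iii) either $\alpha=1$ or there is $s'$ in an s-SCC different from that of $s$ with $s'\rightsquigarrow t$; (iv) either $\beta=1$ or there is $t'$ in a t-SCC different from that of $t$ with $s\rightsquigarrow t'$. *)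

(* Defs.v *)
From mathcomp Require Import all_boot.
Set Implicit Arguments. Unset Strict Implicit. Unset Printing Implicit Defensive.

Section Digraph.
Variable V : finType.
Variable E : rel V.

Definition reach (a b : V) : bool := connect E a b.

Definition scc (x : V) : {set V} := [set y | reach x y && reach y x].

Definition is_scc (S : {set V}) : bool := [exists x, S == scc x].

Definition out_edges (S : {set V}) : {set V * V} :=
  [set p | E p.1 p.2 && (p.1 \in S) && (p.2 \notin S)].
Definition in_edges (S : {set V}) : {set V * V} :=
  [set p | E p.1 p.2 && (p.1 \notin S) && (p.2 \in S)].

Definition is_sSCC (S : {set V}) : bool :=
  [&& is_scc S, out_edges S != set0 & in_edges S == set0].
Definition is_tSCC (S : {set V}) : bool :=
  [&& is_scc S, out_edges S == set0 & in_edges S != set0].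

Definition n_sSCC : nat := #|[set S : {set V} | is_sSCC S]|.
Definition n_tSCC : nat := #|[set S : {set V} | is_tSCC S]|.

Definition gamma : nat := maxn n_sSCC n_tSCC.

Definition weakly_connected : Prop :=
  forall x y : V, connect [rel a b | E a b || E b a] x y.

Definition tight (t s : V) : Prop :=
  [/\ ~~ E t s,
      is_sSCC (scc s),
      is_tSCC (scc t),
      n_sSCC = 1 \/ exists s' : V, [/\ is_sSCC (scc s'), scc s' != scc s & reach s' t]
    & n_tSCC = 1 \/ exists t' : V, [/\ is_tSCC (scc t'), scc t' != scc t & reach s t']].
End Digraph.

Definition add_edge (V : finType) (E : rel V) (t s : V) : rel V :=
  [rel x y | E x y || ((x == t) && (y == s))].

(* Main.v *)
Require Import Defs.
From mathcomp Require Import all_boot.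
From mathcomp Require Import zify.
Set Implicit Arguments. Unset Strict Implicit. Unset Printing Implicit Defensive.

Section Gen.
Variable V : finType.
Implicit Types (G : rel V) (C : {set V}).

Lemma in_closed G C x y : in_edges G C == set0 -> x \in C -> connect G y x -> y \in C.
Proof.
move=> /eqP H xC /connectP[p pth xE]; subst x; elim: p y pth xC => //= z p IH y /andP[Gyz pth] xC.
have zC := IH _ pth xC; apply/negPn/negP => yC.
have : (y, z) \in in_edges G C by rewrite inE /= Gyz yC zC.
by rewrite H inE.
Qed.

Lemma out_closed G C x y : out_edges G C == set0 -> x \in C -> connect G x y -> y \in C.
Proof.
move=> /eqP H xC /connectP[p pth ->]; elim: p x xC pth => //= z p IH x xC /andP[Gxz pth].
apply: (IH z) => //; apply/negPn/negP => zC.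
have : (x, z) \in out_edges G C by rewrite inE /= Gxz xC zC.
by rewrite H inE.
Qed.

Lemma scc_refl G x : x \in scc G x.
Proof. by rewrite inE /reach connect0. Qed.

Lemma scc_eq G x y : y \in scc G x -> scc G y = scc G x.
Proof.
rewrite inE /reach => /andP[xy yx]; apply/setP => z; rewrite !inE /reach.
apply/andP/andP => [[yz zy]|[xz zx]]; split.
- exact: connect_trans xy yz.
- exact: connect_trans zy yx.
- exact: connect_trans yx xz.
- exact: connect_trans zx xy.
Qed.

Lemma is_scc_mem G C x : is_scc G C -> x \in C -> C = scc G x.
Proof. by move=> /existsP[y /eqP ->] /scc_eq ->. Qed.

Lemma scc_is G x : is_scc G (scc G x).
Proof. by apply/existsP; exists x. Qed.

Lemma maximal_ex (r : rel V) : reflexive r -> transitive r ->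
  forall x, exists y, r x y /\ forall z, r y z -> r z y.
Proof.
move=> rr rt x; move: {2}#|[set z | r x z]| (leqnn #|[set z | r x z]|) => n.
elim: n x => [|n IH] x.
  by rewrite leqn0 cards_eq0 => /eqP/setP/(_ x); rewrite !inE rr.
move=> Hn; case: (boolP [forall z, r x z ==> r z x]) => [/forallP H|].
  by exists x; split => // z; move/implyP: (H z).
rewrite negb_forall => /existsP[z]; rewrite negb_imply => /andP[xz zx].
have sub : [set w | r z w] \proper [set w | r x w].
  apply/properP; split.
    by apply/subsetP => w; rewrite !inE => /(rt _ _ _ xz).
  by exists x; rewrite !inE ?rr.
have := proper_card sub => lt.
have [y [zy Hy]] := IH z (leq_trans (leq_trans lt Hn) (leqnn _)).
exists y; split => //; exact: rt zy.
Qed.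

Lemma wc_all G C y : (forall x z : V, connect [rel a b | G a b || G b a] x z) ->
  in_edges G C == set0 -> out_edges G C == set0 -> y \in C -> forall x, x \in C.
Proof.
move=> wc /eqP Hi /eqP Ho yC x; move/connectP: (wc y x) => [p pth ->] {x}.
elim: p y yC pth => //= z p IH y yC /andP[/orP[Gyz|Gzy] pth]; apply: (IH z) => //.
  apply/negPn/negP => zC; have : (y, z) \in out_edges G C by rewrite inE /= Gyz yC zC.
  by rewrite Ho inE.
apply/negPn/negP => zC; have : (z, y) \in in_edges G C by rewrite inE /= Gzy yC zC.
by rewrite Hi inE.
Qed.

End Gen.
Section Spec.
Variable V : finType.
Variables (E : rel V) (t s : V).
Local Notation E' := (add_edge E t s).
Implicit Types (C : {set V}).

Lemma sub_reach x y : connect E x y -> connect E' x y.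
Proof. by apply: connect_sub => a b Eab; apply: connect1; rewrite /add_edge /= Eab. Qed.

Lemma reachE' x y : connect E' x y = connect E x y || connect E x t && connect E s y.
Proof.
apply/idP/idP; last first.
  case/orP => [/sub_reach //|/andP[xt sy]].
  apply: connect_trans (sub_reach xt) _; apply: connect_trans (sub_reach sy).
  by apply: connect1; rewrite /add_edge /= !eqxx orbT.
move/connectP => [p pth ->] {y}; elim: p x pth => /= [|z p IH] x.
  by rewrite connect0.
case/andP => /orP[Exz|/andP[/eqP-> /eqP->]] /IH /orP[zy|/andP[zt sy]].
- by rewrite (connect_trans (connect1 Exz) zy).
- by rewrite (connect_trans (connect1 Exz) zt) sy orbT.
- by rewrite connect0 zy orbT.
- by rewrite connect0 sy orbT.
Qed.

Lemma scc'_s x : ~~ connect E s x -> scc E' x = scc E x.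
Proof.
move=> nsx; apply/setP => y; rewrite !inE /reach !reachE' (negbTE nsx) !andbF !orbF.
case yx: (connect E y x); rewrite ?andbF // andbT.
case: (connect E x y) => //=; apply/negbTE/negP => /andP[_ sy].
by move/negP: nsx; apply; exact: connect_trans sy yx.
Qed.

Lemma scc'_t x : ~~ connect E x t -> scc E' x = scc E x.
Proof.
move=> nxt; apply/setP => y; rewrite !inE /reach !reachE' (negbTE nxt) /=.
case xy: (connect E x y); rewrite /= ?andbF //.
case: (connect E y x); rewrite ?orbT ?andbT //= andbC; apply/negbTE/negP => /andP[_ yt].
by move/negP: nxt; apply; exact: connect_trans xy yt.
Qed.

Lemma out_same C : s \notin C -> t \notin C -> out_edges E' C = out_edges E C.
Proof.
move=> sC tC; apply/setP => -[a b]; rewrite !inE /add_edge /=.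
by case: (a =P t) => [->|]; rewrite ?(negbTE tC) ?andbF ?orbF.
Qed.

Lemma in_same C : s \notin C -> t \notin C -> in_edges E' C = in_edges E C.
Proof.
move=> sC tC; apply/setP => -[a b]; rewrite !inE /add_edge /=.
by case: (b =P s) => [->|]; rewrite ?(negbTE sC) ?andbF ?orbF.
Qed.

Lemma sSCC_same C : s \notin C -> t \notin C -> is_sSCC E' C = is_sSCC E C.
Proof.
move=> sC tC; rewrite /is_sSCC out_same // in_same //.
case Hin: (in_edges E C == set0); rewrite ?andbF //.
have key x : x \in C -> scc E' x = scc E x.
  move=> xC; apply: scc'_s; apply/negP => sx.
  by move/negP: sC; apply; exact: in_closed Hin xC sx.
congr (_ && _); apply/idP/idP => /existsP[x /eqP Cx]; apply/existsP; exists x.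
  by rewrite -key Cx ?scc_refl.
by rewrite key Cx ?scc_refl.
Qed.

Lemma tSCC_same C : s \notin C -> t \notin C -> is_tSCC E' C = is_tSCC E C.
Proof.
move=> sC tC; rewrite /is_tSCC out_same // in_same //.
case Hout: (out_edges E C == set0); rewrite ?andbF //.
have key x : x \in C -> scc E' x = scc E x.
  move=> xC; apply: scc'_t; apply/negP => xt.
  by move/negP: tC; apply; exact: out_closed Hout xC xt.
congr (_ && _).
apply/idP/idP => /existsP[x /eqP Cx]; apply/existsP; exists x.
  by rewrite -key Cx ?scc_refl.
by rewrite key Cx ?scc_refl.
Qed.

End Spec.
Lemma card_split (T : finType) (P Q : pred T) :
  #|[set C | P C]| = #|[set C | P C && Q C]| + #|[set C | P C && ~~ Q C]|.
Proof.
rewrite -(cardID [set C | Q C] [set C | P C]); congr (_ + _); apply: eq_card => x;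
by rewrite !inE // andbC.
Qed.

Section Main.
Variable V : finType.
Variables (E : rel V) (t s : V).
Local Notation E' := (add_edge E t s).
Implicit Types (C : {set V}).

Definition avoid C := (s \notin C) && (t \notin C).
Definition A := #|[set C | is_sSCC E C && avoid C]|.
Definition B := #|[set C | is_tSCC E C && avoid C]|.

Variable Hs : is_sSCC E (scc E s).
Variable Ht : is_tSCC E (scc E t).

Lemma sin0 : in_edges E (scc E s) == set0.
Proof. by case/and3P: Hs. Qed.
Lemma sout0 : out_edges E (scc E s) != set0.
Proof. by case/and3P: Hs. Qed.
Lemma tout0 : out_edges E (scc E t) == set0.
Proof. by case/and3P: Ht. Qed.
Lemma tin0 : in_edges E (scc E t) != set0.
Proof. by case/and3P: Ht. Qed.

Lemma s_notin_t x : s \in scc E x -> is_tSCC E (scc E x) -> False.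
Proof.
move/scc_eq => <- /and3P[_ _ H]; by rewrite sin0 in H.
Qed.

Lemma t_notin_s x : t \in scc E x -> is_sSCC E (scc E x) -> False.
Proof.
move/scc_eq => <- /and3P[_ _ H]; by rewrite (negbTE tin0) in H.
Qed.

Lemma scc_s_t : s \in scc E t -> False.
Proof. by move=> H; apply: (s_notin_t H Ht). Qed.

Lemma nsE : n_sSCC E = A + 1.
Proof.
rewrite /n_sSCC (card_split _ avoid) -/A; congr (_ + _).
rewrite -(cards1 (scc E s)); apply: eq_card => C; rewrite !inE /avoid negb_and !negbK.
apply/andP/eqP => [[HC /orP[sC|tC]]|->]; last by rewrite Hs scc_refl.
  by apply: is_scc_mem sC; case/and3P: HC.
have := is_scc_mem (let: conj h _ := andP HC in h) tC => CE.
by exfalso; rewrite CE in HC tC; apply: (t_notin_s tC HC).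
Qed.

Lemma ntE : n_tSCC E = B + 1.
Proof.
rewrite /n_tSCC (card_split _ avoid) -/B; congr (_ + _).
rewrite -(cards1 (scc E t)); apply: eq_card => C; rewrite !inE /avoid negb_and !negbK.
apply/andP/eqP => [[HC /orP[sC|tC]]|->]; last by rewrite Ht scc_refl orbT.
  have := is_scc_mem (let: conj h _ := andP HC in h) sC => CE.
  by exfalso; rewrite CE in HC sC; apply: (s_notin_t sC HC).
by apply: is_scc_mem tC; case/and3P: HC.
Qed.

Variable wc : weakly_connected E.

Lemma both_empty y : in_edges E (scc E y) == set0 -> out_edges E (scc E y) == set0 -> False.
Proof.
move=> Hi Ho; have all := wc_all wc Hi Ho (scc_refl E y).
have := all s; move/scc_eq => e1; have := all t; move/scc_eq => e2.
by apply: scc_s_t; rewrite e2 -e1 scc_refl.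
Qed.

Lemma allreach_t : B = 0 -> forall x, connect E x t.
Proof.
move=> B0 x.
have [y [xy Hy]] := maximal_ex (@connect0 _ E) (@connect_trans _ E) x.
have Ho : out_edges E (scc E y) == set0.
  apply/negPn/negP => /set0Pn[[a b]]; rewrite inE /= => /andP[/andP[Eab aC] bC].
  move: aC; rewrite inE /reach => /andP[ya _].
  have yb := connect_trans ya (connect1 Eab).
  by move/negP: bC; apply; rewrite inE /reach yb Hy.
case Hi: (in_edges E (scc E y) == set0); first by case: (both_empty Hi Ho).
have HT : is_tSCC E (scc E y) by rewrite /is_tSCC scc_is Ho Hi.
case Av: (avoid (scc E y)).
  have : scc E y \in [set C | is_tSCC E C && avoid C] by rewrite inE HT Av.
  move=> Hin; have : 0 < B by apply/card_gt0P; exists (scc E y).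
  by rewrite B0.
move/negbT: Av; rewrite /avoid negb_and !negbK => /orP[sC|].
  by case: (s_notin_t sC HT).
rewrite inE /reach => /andP[yt _]; exact: connect_trans xy yt.
Qed.

Lemma allreach_s : A = 0 -> forall x, connect E s x.
Proof.
move=> A0 x.
have [y [xy Hy]] := maximal_ex (r := fun a b => connect E b a)
   (fun z => connect0 E z) (fun y x z hxy hyz => connect_trans hyz hxy) x.
have Hi : in_edges E (scc E y) == set0.
  apply/negPn/negP => /set0Pn[[a b]]; rewrite inE /= => /andP[/andP[Eab aC] bC].
  move: bC; rewrite inE /reach => /andP[_ by'].
  have ay := connect_trans (connect1 Eab) by'.
  by move/negP: aC; apply; rewrite inE /reach ay Hy.
case Ho: (out_edges E (scc E y) == set0); first by case: (both_empty Hi Ho).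
have HS : is_sSCC E (scc E y) by rewrite /is_sSCC scc_is Ho Hi.
case Av: (avoid (scc E y)).
  have : scc E y \in [set C | is_sSCC E C && avoid C] by rewrite inE HS Av.
  move=> Hin; have : 0 < A by apply/card_gt0P; exists (scc E y).
  by rewrite A0.
move/negbT: Av; rewrite /avoid negb_and !negbK => /orP[|tC].
  rewrite inE /reach => /andP[_ sy]; exact: connect_trans sy xy.
by case: (t_notin_s tC HS).
Qed.

Lemma E'ts : E' t s.
Proof. by rewrite /add_edge /= !eqxx orbT. Qed.

Lemma newS C : is_sSCC E' C -> ~~ avoid C -> C = scc E' s.
Proof.
move=> HC; have /and3P[sc _ Hi] := HC.
rewrite /avoid negb_and !negbK => /orP[sC|tC]; first exact: is_scc_mem sC.
have CE := is_scc_mem sc tC.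
have [[a b]] := set0Pn _ tin0; rewrite inE /= => /andP[/andP[Eab aT] bT].
have bC : b \in C.
  move: bT; rewrite CE !inE /reach => /andP[tb bt]; by rewrite !sub_reach.
have aC : a \in C.
  apply: (in_closed Hi bC); apply: connect1; by rewrite /add_edge /= Eab.
have := aC; rewrite {1}CE inE /reach reachE' => /andP[/orP[ta|/andP[_ sa]] _].
  by case/negP: aT; apply: (out_closed tout0 (scc_refl E t) ta).
have sC : s \in C by apply: (in_closed Hi aC); rewrite sub_reach.
exact: is_scc_mem sC.
Qed.

Lemma newT C : is_tSCC E' C -> ~~ avoid C -> C = scc E' t.
Proof.
move=> HC; have /and3P[sc Ho _] := HC.
rewrite /avoid negb_and !negbK => /orP[sC|tC]; last exact: is_scc_mem tC.
have CE := is_scc_mem sc sC.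
have [[a b]] := set0Pn _ sout0; rewrite inE /= => /andP[/andP[Eab aS] bS].
have aC : a \in C.
  move: aS; rewrite CE !inE /reach => /andP[sa as']; by rewrite !sub_reach.
have bC : b \in C.
  apply: (out_closed Ho aC); apply: connect1; by rewrite /add_edge /= Eab.
have := bC; rewrite {1}CE inE /reach !reachE' => /andP[_] /orP[bs|/andP[bt _]].
  by case/negP: bS; apply: (in_closed sin0 (scc_refl E s) bs).
have tC : t \in C by apply: (out_closed Ho bC); rewrite sub_reach.
exact: is_scc_mem tC.
Qed.

Lemma nsE' : n_sSCC E' = A + is_sSCC E' (scc E' s).
Proof.
rewrite /n_sSCC (card_split _ avoid); congr (_ + _).
  apply: eq_card => C; rewrite !inE; case Av: (avoid C); rewrite ?andbF ?andbT //.
  by move/andP: Av => [sC tC]; rewrite sSCC_same.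
case H: (is_sSCC E' (scc E' s)).
  rewrite /= -(cards1 (scc E' s)); apply: eq_card => C; rewrite !inE.
  apply/andP/eqP => [[HC Av]|->]; first exact: newS.
  by rewrite H /avoid negb_and !negbK scc_refl.
apply/eqP; rewrite cards_eq0; apply/eqP/setP => C; rewrite !inE.
apply/negbTE/negP => /andP[HC Av]; have CE := newS HC Av.
by rewrite CE H in HC.
Qed.

Lemma ntE' : n_tSCC E' = B + is_tSCC E' (scc E' t).
Proof.
rewrite /n_tSCC (card_split _ avoid); congr (_ + _).
  apply: eq_card => C; rewrite !inE; case Av: (avoid C); rewrite ?andbF ?andbT //.
  by move/andP: Av => [sC tC]; rewrite tSCC_same.
case H: (is_tSCC E' (scc E' t)).
  rewrite /= -(cards1 (scc E' t)); apply: eq_card => C; rewrite !inE.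
  apply/andP/eqP => [[HC Av]|->]; first exact: newT.
  by rewrite H /avoid negb_and !negbK scc_refl orbT.
apply/eqP; rewrite cards_eq0; apply/eqP/setP => C; rewrite !inE.
apply/negbTE/negP => /andP[HC Av]; have CE := newT HC Av.
by rewrite CE H in HC.
Qed.

Hypothesis H3 : n_sSCC E = 1 \/ exists s' : V,
  [/\ is_sSCC E (scc E s'), scc E s' != scc E s & reach E s' t].
Hypothesis H4 : n_tSCC E = 1 \/ exists t' : V,
  [/\ is_tSCC E (scc E t'), scc E t' != scc E t & reach E s t'].

Lemma ks_fact : is_sSCC E' (scc E' s) ->
  [/\ A = 0, 0 < B & ~~ is_tSCC E' (scc E' t)].
Proof.
move=> HN; have /and3P[_ Ho Hi] := HN.
have tN : t \in scc E' s by apply: (in_closed Hi (scc_refl _ s)); apply: connect1; exact: E'ts.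
have eN := scc_eq tN.
split.
- case: H3 => [|[s' [HS' ne rs't]]]; first by rewrite nsE; lia.
  have /and3P[_ _ Hi'] := HS'.
  have s'N : s' \in scc E' s by apply: (in_closed Hi tN); exact: sub_reach.
  move: s'N; rewrite inE /reach reachE' => /andP[/orP[ss'|/andP[_ ss']] _];
  have := in_closed Hi' (scc_refl E s') ss' => H;
  by case/negP: ne; apply/eqP; rewrite (scc_eq H).
- rewrite lt0n; apply/negP => /eqP B0.
  have [[u v]] := set0Pn _ Ho; rewrite inE /= => /andP[/andP[E'uv uN] vN].
  case/negP: vN; rewrite inE /reach.
  move: uN; rewrite inE /reach => /andP[su _].
  rewrite (connect_trans su (connect1 E'uv)) /=.
  apply: (@connect_trans _ _ t); last by apply: connect1; exact: E'ts.
  exact: sub_reach (allreach_t B0 v).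
- move: Hi; rewrite -eN => H; apply/negP => /and3P[_ _ H'].
  by rewrite H in H'.
Qed.

Lemma kt_fact : is_tSCC E' (scc E' t) ->
  [/\ B = 0, 0 < A & ~~ is_sSCC E' (scc E' s)].
Proof.
move=> HN; have /and3P[_ Ho Hi] := HN.
have sN : s \in scc E' t by apply: (out_closed Ho (scc_refl _ t)); apply: connect1; exact: E'ts.
have eN := scc_eq sN.
split.
- case: H4 => [|[t' [HT' ne rst']]]; first by rewrite ntE; lia.
  have /and3P[_ Ho' _] := HT'.
  have t'N : t' \in scc E' t by apply: (out_closed Ho sN); exact: sub_reach.
  move: t'N; rewrite inE /reach !reachE' => /andP[_] /orP[t't|/andP[t't _]];
  have := out_closed Ho' (scc_refl E t') t't => H;
  by case/negP: ne; apply/eqP; rewrite (scc_eq H).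
- rewrite lt0n; apply/negP => /eqP A0.
  have [[u v]] := set0Pn _ Hi; rewrite inE /= => /andP[/andP[E'uv uN] vN].
  case/negP: uN; rewrite inE /reach.
  move: vN; rewrite inE /reach => /andP[_ vt].
  rewrite (connect_trans (connect1 E'uv) vt) andbT.
  apply: (@connect_trans _ _ s); first by apply: connect1; exact: E'ts.
  exact: sub_reach (allreach_s A0 u).
- move: Ho; rewrite -eN => H; apply/negP => /and3P[_ H' _].
  by rewrite H in H'.
Qed.

End Main.

Theorem proposition1 (V : finType) (E : rel V) (t s : V) :
  weakly_connected E -> tight E t s ->
  gamma (add_edge E t s) = (gamma E).-1.
Proof.
move=> wc [_ Hs Ht H3 H4].
rewrite /gamma (nsE Hs Ht) (ntE Hs Ht) nsE' ?ntE' //.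
case K1: (is_sSCC _ (scc _ s)); case K2: (is_tSCC _ (scc _ t)) => /=.
- by have [_ _] := ks_fact Hs Ht wc H3 H4 K1; rewrite K2.
- have [-> HB _] := ks_fact Hs Ht wc H3 H4 K1; lia.
- have [-> HA _] := kt_fact Hs Ht wc H3 H4 K2; lia.
- lia.
Qed.
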